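(* Let $p$ be a prime and $k,\ell$ integers with $k>0$, $\ell\ge0$; put $q=p^k$ and $Q=p^{\ell}$. For any $c\in\mathbb{F}_q^*$, let \[ f_6(X)=X^{3q}-3X^{2q+1}+3X^{q+2}-X^3+cX^{q^2Q}+cX^{qQ}+cX^{Q}. \] Then $f_6(X)$ permutes $\mathbb{F}_{q^3}$ if and only if $q\equiv 2\pmod 3$.
   Context: A polynomial permutes $\mathbb{F}_{q^3}$ if the induced map $\mathbb{F}_{q^3}\to\mathbb{F}_{q^3}$ is a bijection. *)

(* Defs.v *)
From HB Require Import structures.
From mathcomp Require Import all_boot all_order all_algebra all_field.
Set Implicit Arguments. Unset Strict Implicit. Unset Printing Implicit Defensive.
Import GRing.Theory.
Local Open Scope ring_scope.

Definition permutes_field (F : finFieldType) (P : {poly F}) : Prop :=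
  bijective (fun x : F => P.[x]).

Definition f6 (F : finFieldType) (q Q : nat) (c : F) : {poly F} :=
  'X^(3 * q) - 3%:R *: 'X^(2 * q + 1) + 3%:R *: 'X^(q + 2) - 'X^3
  + c *: 'X^(q ^ 2 * Q) + c *: 'X^(q * Q) + c *: 'X^Q.

(* Main.v *)
Require Import Defs.
From HB Require Import structures.
From mathcomp Require Import all_boot all_order all_algebra all_field.
From mathcomp Require Import all_fingroup all_solvable.
From mathcomp Require Import ring zify.
Import GRing.Theory.
Local Open Scope ring_scope.

Lemma frobD (F : fieldType) p (Hp : p \in [pchar F]) n (x y : F) :
  (x + y) ^+ (p ^ n) = x ^+ (p ^ n) + y ^+ (p ^ n).
Proof.
elim: n => [|n IH]; first by rewrite !expn0 !expr1.
rewrite expnSr !exprM IH.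
by rewrite -!(pFrobenius_autE Hp) pFrobenius_autD_comm //; apply: mulrC.
Qed.

Lemma frobN (F : fieldType) p (Hp : p \in [pchar F]) n (y : F) :
  (- y) ^+ (p ^ n) = - y ^+ (p ^ n).
Proof.
apply/eqP; rewrite -subr_eq0 opprK addrC -frobD // subrr expr0n.
by rewrite expn_eq0 eqn0Ngt (prime_gt0 (pcharf_prime Hp)).
Qed.

Lemma frobB (F : fieldType) p (Hp : p \in [pchar F]) n (x y : F) :
  (x - y) ^+ (p ^ n) = x ^+ (p ^ n) - y ^+ (p ^ n).
Proof. by rewrite frobD // frobN. Qed.
Lemma core (F : fieldType) (q : nat)
  (frD : forall x y : F, (x + y) ^+ q = x ^+ q + y ^+ q)
  (frB : forall x y : F, (x - y) ^+ q = x ^+ q - y ^+ q)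
  (fr3 : forall x : F, ((x ^+ q) ^+ q) ^+ q = x)
  (H3 : 3%:R != 0 :> F)
  (Hcube : forall x y : F, x ^+ 3 = y ^+ 3 -> x = y)
  (a b : F) :
  a + a ^+ q + (a ^+ q) ^+ q = 0 -> b + b ^+ q + (b ^+ q) ^+ q = 0 ->
  (a ^+ 3 - b ^+ 3) ^+ q = a ^+ 3 - b ^+ 3 -> a = b.
Proof.
pose fr (x : F) := x ^+ q.
have frM x y : fr (x * y) = fr x * fr y by rewrite /fr exprMn.
have fixK0 w : fr w = w -> w + fr w + fr (fr w) = 0 -> w = 0.
  move=> Hw; rewrite !Hw => H.
  have : 3%:R * w = 0 by rewrite -H; ring.
  by move/eqP; rewrite mulf_eq0 (negbTE H3) /= => /eqP.
pose s x := x * fr x + fr x * fr (fr x) + fr (fr x) * x.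
pose N x := x * fr x * fr (fr x).
have sfix x : fr (s x) = s x.
  rewrite /s /fr !frD !exprMn fr3; ring.
have Nfix x : fr (N x) = N x.
  rewrite /N /fr !exprMn fr3; ring.
have cubeE x : x + fr x + fr (fr x) = 0 -> x ^+ 3 = - s x * x + N x.
  move=> Hx; have E : fr (fr x) = - x - fr x.
    by apply/eqP; rewrite -subr_eq0; apply/eqP; rewrite -Hx; ring.
  rewrite /s /N E; ring.
have cubefix x : fr (x ^+ 3) = x ^+ 3 -> fr x = x.
  by move=> H; apply: Hcube; rewrite -H /fr -!exprM mulnC.
have zcase x : x + fr x + fr (fr x) = 0 -> s x * x = 0 -> x = 0.
  move=> Hx /eqP; rewrite mulf_eq0 => /orP [/eqP Hs|/eqP //].
  apply: fixK0 => //; apply: cubefix.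
  by rewrite cubeE // Hs oppr0 mul0r add0r Nfix.
move=> Ha Hb Hab.
have Hw : s a * a = s b * b.
  apply/eqP; rewrite -subr_eq0; apply/eqP.
  have wE : s a * a - s b * b = N a - N b - (a ^+ 3 - b ^+ 3).
    rewrite (cubeE a) // (cubeE b) //; ring.
  have wfix : fr (s a * a - s b * b) = s a * a - s b * b.
    by rewrite wE /fr frB Hab frB -/(fr (N a)) -/(fr (N b)) !Nfix.
  apply: fixK0 => //.
  have E1 : fr (fr (s a * a - s b * b)) = s a * fr (fr a) - s b * fr (fr b).
    by rewrite /fr !frB !exprMn -/(fr (s a)) -/(fr (s b)) -/(fr (fr (s a))) -/(fr (fr (s b))) !sfix.
  have E0 : fr (s a * a - s b * b) = s a * fr a - s b * fr b.
    by rewrite /fr !frB !exprMn -/(fr (s a)) -/(fr (s b)) !sfix.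
  rewrite E1 E0.
  have -> : s a * a - s b * b + (s a * fr a - s b * fr b) + (s a * fr (fr a) - s b * fr (fr b))
     = s a * (a + fr a + fr (fr a)) - s b * (b + fr b + fr (fr b)) by ring.
  by rewrite Ha Hb !mulr0 subrr.
have [sb0|sbN0] := eqVneq (s b) 0.
  have b0 : b = 0 by apply: zcase => //; rewrite sb0 mul0r.
  have a0 : a = 0 by apply: zcase => //; rewrite Hw sb0 mul0r.
  by rewrite a0 b0.
have [sa0|saN0] := eqVneq (s a) 0.
  have a0 : a = 0 by apply: zcase => //; rewrite sa0 mul0r.
  have b0 : b = 0 by apply: zcase => //; rewrite -Hw sa0 mul0r.
  by rewrite a0 b0.
have fr0 : fr 0 = 0.
  by have := frD 0 0; rewrite addr0 -{1}[0 ^+ q]addr0 => /addrI H; rewrite /fr -H.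
have aN0 : a != 0.
  by apply/eqP => a0; move: saN0; rewrite /s a0 fr0 !mul0r !mulr0 !addr0 eqxx.
pose l := s a / s b.
have bE : b = l * a by rewrite /l mulrAC Hw mulrAC divff // mul1r.
have lfix : fr l = l by rewrite /l /fr exprMn exprVn -/(fr (s a)) -/(fr (s b)) !sfix.
have sbE : s b = l ^+ 2 * s a.
  clearbody l; rewrite bE /s !frM !lfix; ring.
have l3 : l ^+ 3 = 1 ^+ 3.
  have : s a * a * (l ^+ 3 - 1) = 0.
    have -> : s a * a * (l ^+ 3 - 1) = (l ^+ 2 * s a) * (l * a) - s a * a by ring.
    by rewrite -sbE -bE -Hw subrr.
  move/eqP; rewrite !mulf_eq0 (negbTE saN0) (negbTE aN0) /= subr_eq0 expr1n.
  by move/eqP.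
by rewrite bE (Hcube _ _ l3) mul1r.
Qed.
Lemma f6E (F : finFieldType) q Q (c x : F)
  (frQ : forall x y : F, (x + y) ^+ Q = x ^+ Q + y ^+ Q) :
  (f6 q Q c).[x] = (x ^+ q - x) ^+ 3 + c * (x + x ^+ q + (x ^+ q) ^+ q) ^+ Q.
Proof.
rewrite /f6 !hornerE !frQ.
rewrite (mulnC 3) (exprM x q 3) exprD (mulnC 2) exprM (exprD x q 2).
rewrite (expnS q 1) expn1 !exprM.

rewrite !expr2 expr1; ring.
Qed.

Theorem corollary1p9 (p k l : nat) (F : finFieldType) (c : F) :
  prime p -> (0 < k)%N -> #|F| = ((p ^ k) ^ 3)%N ->
  c != 0 -> c ^+ (p ^ k) = c ->
  permutes_field (f6 (p ^ k) (p ^ l) c) <-> (p ^ k %% 3 = 2)%N.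
Proof.
move=> pp k0 HF c0 cq.
have Hp : p \in [pchar F] by apply: (card_finPcharP (n := (k * 3)%N)) => //; rewrite HF expnM.
set q := (p ^ k)%N in HF cq *.
set Q := (p ^ l)%N.
have frD : forall x y : F, (x + y) ^+ q = x ^+ q + y ^+ q by move=> x y; apply: frobD.
have frB : forall x y : F, (x - y) ^+ q = x ^+ q - y ^+ q by move=> x y; apply: frobB.
have frQ : forall x y : F, (x + y) ^+ Q = x ^+ Q + y ^+ Q by move=> x y; apply: frobD.
have fr3 : forall x : F, ((x ^+ q) ^+ q) ^+ q = x.
  move=> x; rewrite -!exprM -[RHS](expf_card x) HF; congr (_ ^+ _).
have q1 : (1 < q)%N by rewrite -(expn0 p) ltn_exp2l // prime_gt1.
have Q0 : (0 < Q)%N by rewrite expn_gt0 prime_gt0.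
have E x := @f6E F q Q c x frQ.
split.
-
  move=> [g fK gK].
  have finj : injective (fun x : F => (f6 q Q c).[x]) by apply: can_inj fK.
  have : (q %% 3 < 3)%N by rewrite ltn_pmod.
  case Hm: (q %% 3)%N => [|[|[|m]]] // _.
  +
    exfalso.
    have p3 : p = 3%N.
      have : (3 %| q)%N by apply/dvdnP; exists (q %/ 3)%N; rewrite {1}(divn_eq q 3) Hm addn0.
      by rewrite Euclid_dvdX // k0 andbT dvdn_prime2 // => /eqP.
    have H3 : 3%:R = 0 :> F by rewrite -p3; apply: pcharf0.
    have e0 n : (0 < n)%N -> (0:F) ^+ n = 0 by case: n => // n _; rewrite exprS mul0r.
    have f0 : (f6 q Q c).[0] = 0.
      by rewrite E !e0 ?(ltnW q1) // !addr0 subrr !e0 // mulr0 addr0.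
    have f1 : (f6 q Q c).[1] = 0.
      rewrite E !expr1n subrr expr0n /= add0r.
      have -> : (1 + 1 + 1 : F) = 3%:R by ring.
      by rewrite H3 e0 // mulr0.
    have := finj 0 1; rewrite /= f0 f1 => /(_ erefl) /eqP.
    by rewrite eq_sym oner_eq0.
  +
    exfalso.
    have [x xq] : exists x : F, x ^+ q != x.
      have [/existsP //|] := boolP [exists x : F, x ^+ q != x].
      rewrite negb_exists => /forallP Hall; exfalso.
      have P0 : ('X^q - 'X : {poly F}) != 0.
        by rewrite -size_poly_eq0 size_polyDl ?size_polyXn ?size_polyN ?size_polyX.
      have := max_poly_roots P0 _ (enum_uniq F).
      rewrite -cardE HF.
      have -> : all (root ('X^q - 'X)) (enum F).
        apply/allP => y _; rewrite /root !hornerE.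
        by move: (Hall y); rewrite negbK subr_eq0.
      move=> /(_ isT); rewrite size_polyDl ?size_polyXn ?size_polyN ?size_polyX //.
      rewrite ltnS leqNgt => /negP; apply.
      idtac.
      nia.
    have [w w3 w1] : exists2 w : F, w ^+ 3 = 1 & w != 1.
      have d3 : (3 %| #|[set: {unit F}]|)%N.
        rewrite card_finField_unit HF.
        have := divn_eq (q ^ 3) 3; rewrite -modnXm Hm /= => ->.
        by rewrite addn1 /= dvdn_mull.
      have [u _ ou] := Cauchy (isT : prime 3) d3.
      exists (val u).
        by rewrite -FinRing.val_unitX -ou expg_order.
      apply/eqP => u1.
      have : u = 1%g by apply: val_inj; rewrite u1.
      by move=> u1'; move: ou; rewrite u1' order1.
    have wq : w ^+ q = w.
      by rewrite (divn_eq q 3) Hm exprD mulnC exprM w3 expr1n mul1r expr1.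
    set z := x ^+ q - x.
    have Tz : z + z ^+ q + (z ^+ q) ^+ q = 0.
      by rewrite /z !frB fr3; ring.
    have z0 : z != 0 by rewrite /z subr_eq0.
    have := finj z (w * z); rewrite !E !exprMn !wq Tz.
    have -> : w * z + w * z ^+ q + w * (z ^+ q) ^+ q = w * (z + z ^+ q + (z ^+ q) ^+ q) by ring.
    rewrite Tz mulr0.
    have -> : w * z ^+ q - w * z = w * (z ^+ q - z) by ring.
    rewrite exprMn w3 mul1r => /(_ erefl) /eqP.
    rewrite -subr_eq0 -{1}(mul1r z) -mulrBl mulf_eq0 (negbTE z0) orbF subr_eq0 eq_sym.
    by rewrite (negbTE w1).
-
  move=> Hm.
  have H3 : 3%:R != 0 :> F.
    apply/negP; rewrite -(dvdn_pcharf Hp) dvdn_prime2 // => /eqP p3.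
    move: Hm; rewrite /q p3 -(prednK k0) expnS modnMr //.
  have Hcube : forall x y : F, x ^+ 3 = y ^+ 3 -> x = y.
    set n := #|F|.
    have nm : (n %% 3 = 2)%N by rewrite /n HF -modnXm Hm.
    have nE := divn_eq n 3; rewrite nm in nE.
    set j := (n %/ 3)%N in nE.
    have key : forall x : F, (x ^+ 3) ^+ (2 * j + 1) = x.
      move=> x; rewrite -exprM.
      have [->|xn0] := eqVneq x 0.
        have -> : (3 * (2 * j + 1) = (6 * j + 2).+1)%N by lia.
        by rewrite exprS mul0r.

      apply: (mulIf xn0); rewrite -exprSr.
      have -> : (3 * (2 * j + 1)).+1 = (n * 2)%N by rewrite nE; lia.
      by rewrite exprM expf_card expr2.
    by move=> x y Hxy; rewrite -(key x) -(key y) Hxy.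
  apply: injF_bij => x1 x2; rewrite !E => Heq.
  set y1 := x1 ^+ q - x1; set y2 := x2 ^+ q - x2.
  set t1 := x1 + x1 ^+ q + (x1 ^+ q) ^+ q; set t2 := x2 + x2 ^+ q + (x2 ^+ q) ^+ q.
  fold y1 y2 t1 t2 in Heq.
  have Tfix : forall x : F, (x + x ^+ q + (x ^+ q) ^+ q) ^+ q = x + x ^+ q + (x ^+ q) ^+ q.
    by move=> x; rewrite !frD fr3; ring.
  have Ty : forall x : F, let y := x ^+ q - x in y + y ^+ q + (y ^+ q) ^+ q = 0.
    by move=> x /=; rewrite !frB fr3; ring.
  have yE : y1 = y2.
    apply: (@core F q frD frB fr3 H3 Hcube _ _ (Ty x1) (Ty x2)).
    have -> : y1 ^+ 3 - y2 ^+ 3 = c * (t2 ^+ Q - t1 ^+ Q).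
      move/eqP: Heq; rewrite -subr_eq0 => /eqP H; apply/eqP; rewrite -subr_eq0; apply/eqP; rewrite -H /y1 /y2 /t1 /t2; ring.
    by rewrite exprMn cq frB -!exprM mulnC !exprM Tfix Tfix.
  have tE : t1 = t2.
    have : c * (t1 ^+ Q - t2 ^+ Q) = 0.
      move/eqP: Heq; rewrite -subr_eq0 => /eqP H; rewrite -H /t1 /t2; move: yE; rewrite /y1 /y2 => ->; ring.
    move/eqP; rewrite mulf_eq0 (negbTE c0) /= -frobB // expf_eq0 subr_eq0 => /andP [_ /eqP] //.
  have d0 : x1 - x2 = 0.
    have dfix : (x1 - x2) ^+ q = x1 - x2.
      apply/eqP; rewrite frB -subr_eq0; apply/eqP.
      have -> : x1 ^+ q - x2 ^+ q - (x1 - x2) = y1 - y2 by rewrite /y1 /y2; ring.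
      by rewrite yE subrr.
    have : 3%:R * (x1 - x2) = 0.
      have -> : 3%:R * (x1 - x2) = (x1 - x2) + (x1 - x2) ^+ q + ((x1 - x2) ^+ q) ^+ q.
        by rewrite !dfix; ring.
      rewrite !frB; have -> : x1 - x2 + (x1 ^+ q - x2 ^+ q) + (x1 ^+ q ^+ q - x2 ^+ q ^+ q) = t1 - t2.
        by rewrite /t1 /t2; ring.
      by rewrite tE subrr.
    by move/eqP; rewrite mulf_eq0 (negbTE H3) /= => /eqP.
  by apply/eqP; rewrite -subr_eq0 d0.
Qed.
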